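(* Under the standing setting and assumptions (A1)–(A3) described in the context, assume $\mathcal A^\infty\cap\ker(\pi)=\{0\}$. Then $\mathcal R$ is upper semicontinuous at every point of $\mathcal X$.
   Context: Let $\mathcal X$ be a Hausdorff, first countable, locally convex topological vector space over $\mathbb R$, partially ordered by a partial order $\geq$ with positive cone $\mathcal X_+=\{X\in\mathcal X: X\geq 0\}$. Let $\mathcal M\subset\mathcal X$ be a vector subspace with $1<\dim\mathcal M<\infty$, carrying the relative topology, and let $\pi:\mathcal M\to\mathbb R$ be linear with $\ker(\pi)=\{Z\in\mathcal M:\pi(Z)=0\}$. Standing assumptions: (A1) there is $U\in\mathcal M\cap\mathcal X_+$ with $\pi(U)=1$; (A2) $\mathcal A\subsetneq\mathcal X$ is closed, contains $0$, and satisfies $\mathcal A+\mathcal X_+\subset\mathcal A$; (A3) the map $\rho(X)=\inf\{\pi(Z): Z\in\mathcal M,\ X+Z\in\mathcal A\}$ is finitely valued and continuous on $\mathcal X$. The optimal payoff map is $\mathcal R(X)=\{Z\in\mathcal M: X+Z\in\mathcal A,\ \pi(Z)=\rho(X)\}$. The asymptotic cone is $\mathcal A^\infty=\bigcap_{\varepsilon>0}\mathrm{cl}\{\lambda X:\lambda\in[0,\varepsilon],X\in\mathcal A\}$. $\mathcal R$ is upper semicontinuous at $X$ if for every open $\mathcal U\subset\mathcal M$ with $\mathcal R(X)\subset\mathcal U$ there is an open neighborhood $\mathcal U_X$ of $X$ with $\mathcal R(Y)\subset\mathcal U$ for all $Y\in\mathcal U_X$. *)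

(* Defs.v *)
From HB Require Import structures.
From mathcomp Require Import all_boot all_order all_algebra.
From mathcomp Require Import all_classical all_reals all_analysis.
Set Implicit Arguments. Unset Strict Implicit. Unset Printing Implicit Defensive.
Import Order.TTheory GRing.Theory Num.Theory.
Import numFieldTopology.Exports.
Local Open Scope classical_set_scope.
Local Open Scope ring_scope.

Definition first_countable (T : topologicalType) : Prop :=
  forall x : T, exists B : set_system T,
    [/\ countable B, (forall b, B b -> nbhs x b) &
        (forall U, nbhs x U -> exists2 b, B b & b `<=` U)].

Definition partial_order (T : Type) (le : T -> T -> Prop) : Prop :=
  [/\ forall x, le x x,
      (forall x y, le x y -> le y x -> x = y) &
      (forall x y z, le x y -> le y z -> le x z)].

Section defs.
Variables (R : realType) (X : tvsType R).

Definition subspace_of_dim (M : set X) (n : nat) : Prop :=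
  exists b : 'I_n -> X,
    (forall c : 'I_n -> R, \sum_(i < n) c i *: b i = 0 -> forall i, c i = 0) /\
    M = [set x | exists c : 'I_n -> R, x = \sum_(i < n) c i *: b i].

Definition linear_on (M : set X) (pi : X -> R) : Prop :=
  forall (a : R) (x y : X), M x -> M y -> pi (a *: x + y) = a * pi x + pi y.

Definition pos_cone (le : X -> X -> Prop) : set X := [set x | le 0 x].

Definition acc_values (A M : set X) (pi : X -> R) (x : X) : set R :=
  [set pi z | z in [set z | M z /\ A (x + z)]].

Definition rho (A M : set X) (pi : X -> R) (x : X) : R :=
  inf (acc_values A M pi x).

(* rho is finitely valued: the infimum is a real number, i.e. the set is
   nonempty and bounded below *)
Definition rho_finite (A M : set X) (pi : X -> R) : Prop :=
  forall x, acc_values A M pi x !=set0 /\ has_lbound (acc_values A M pi x).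

Definition optimal_payoff (A M : set X) (pi : X -> R) (x : X) : set X :=
  [set z | [/\ M z, A (x + z) & pi z = rho A M pi x]].

Definition ker_on (M : set X) (pi : X -> R) : set X :=
  [set z | M z /\ pi z = 0].

Definition asymptotic_cone (A : set X) : set X :=
  [set x | forall e : R, 0 < e ->
     closure [set y | exists l a, [/\ 0 <= l <= e, A a & y = l *: a]] x].

(* upper semicontinuity of a set-valued map F : X -> set X with values in M,
   where M carries the relative topology *)
Definition usc_at (M : set X) (F : X -> set X) (x : X) : Prop :=
  forall U : set X, (exists2 O : set X, open O & U = O `&` M) ->
    F x `<=` U ->
    exists2 V : set X, open V /\ V x & forall y, V y -> F y `<=` U.

End defs.

(* Main.v *)
Require Import Defs.
From HB Require Import structures.
From mathcomp Require Import all_boot all_order all_algebra.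
From mathcomp Require Import all_classical all_reals all_analysis.
From mathcomp Require Import ring lra.
Import Order.TTheory GRing.Theory Num.Theory.
Import numFieldTopology.Exports.
Local Open Scope classical_set_scope.
Local Open Scope ring_scope.
Lemma tvs_cvgD (R : realType) (X : tvsType R) (T : Type) (F : set_system T)
  {FF : Filter F} (f g : T -> X) a b :
  f @ F --> a -> g @ F --> b -> (fun t => f t + g t) @ F --> a + b.
Proof.
move=> fa gb.
apply: (cvg_comp (fun t => (f t, g t)) (fun p : X * X => p.1 + p.2) (cvg_pair fa gb)).
exact: (@add_continuous _ (a, b)).
Qed.

Lemma tvs_cvgZ (R : realType) (X : tvsType R) (T : Type) (F : set_system T)
  {FF : Filter F} (s : T -> R) (f : T -> X) (k : R) (a : X) :
  s @ F --> k -> f @ F --> a -> (fun t => s t *: f t) @ F --> k *: a.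
Proof.
move=> sk fa.
apply: (cvg_comp (fun t => ((s t : R^o), f t)) (fun p : R^o * X => p.1 *: p.2) (@cvg_pair _ _ _ _ (nbhs (k : R^o)) _ _ _ _ _ _ sk fa)).
exact: (@scale_continuous _ _ ((k : R^o), a)).
Qed.

Lemma tvs_cvg_sum (R : realType) (X : tvsType R) (T : Type) (F : set_system T)
  {FF : Filter F} (I : Type) (r : seq I) (f : I -> T -> X) (a : I -> X) :
  (forall i, f i @ F --> a i) ->
  (fun t => \sum_(i <- r) f i t) @ F --> \sum_(i <- r) a i.
Proof.
move=> fa; elim: r => [|i r IH].
  rewrite big_nil.
  have -> : (fun t => \sum_(i <- [::]) f i t) = fun=> 0 by apply: funext => t; rewrite big_nil.
  exact: cvg_cst.
rewrite big_cons.
have -> : (fun t => \sum_(j <- i :: r) f j t) = (fun t => f i t + \sum_(j <- r) f j t).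
  by apply: funext => t; rewrite big_cons.
exact: tvs_cvgD.
Qed.

Lemma R_cvg_sum (R : realType) (T : Type) (F : set_system T)
  {FF : Filter F} (I : Type) (r : seq I) (f : I -> T -> R) (a : I -> R) :
  (forall i, f i @ F --> a i) ->
  (fun t => \sum_(i <- r) f i t) @ F --> \sum_(i <- r) a i.
Proof.
move=> fa; elim: r => [|i r IH].
  rewrite big_nil.
  have -> : (fun t => \sum_(i <- [::]) f i t) = fun=> 0 by apply: funext => t; rewrite big_nil.
  exact: cvg_cst.
rewrite big_cons.
have -> : (fun t => \sum_(j <- i :: r) f j t) = (fun t => f i t) + (fun t => \sum_(j <- r) f j t).
  by apply: funext => t; rewrite big_cons.
exact: cvgD.
Qed.

Lemma near_lim_eq (R : realType) (T : Type) (F : set_system T)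
  {FF : ProperFilter F} (f g : T -> R) (a b : R) :
  f @ F --> a -> g @ F --> b -> (\forall t \near F, f t = g t) -> a = b.
Proof.
move=> fa gb fg.
have gb' : f @ F --> b.
  apply: cvg_trans gb; apply: near_eq_cvg; apply: filterS fg => t /= ->; done.
exact: (cvg_unique _ fa gb').
Qed.

Lemma closure_lim (R : realType) (X : tvsType R) (T : Type) (F : set_system T)
  {FF : ProperFilter F} (u : T -> X) (S : set X) w :
  u @ F --> w -> (\forall t \near F, S (u t)) -> closure S w.
Proof.
move=> uw Su B Bw.
have : \forall t \near F, B (u t) by exact: uw.
move=> FB; have [t [St Bt]] := filter_ex (filterI Su FB).
by exists (u t).
Qed.
Arguments tvs_cvgD {R X T F FF f g a b}.
Arguments tvs_cvgZ {R X T F FF s f k a}.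

Theorem mainTheorem16 (R : realType) (X : tvsType R)
  (hausX : hausdorff_space X) (fcX : first_countable X)
  (le : X -> X -> Prop) (hle : partial_order le)
  (M : set X) (n : nat) (hn : (1 < n)%N) (hM : subspace_of_dim M n)
  (pi : X -> R) (hpi : linear_on M pi)
  (A : set X)
  (A1 : exists2 U : X, M U /\ pos_cone le U & pi U = 1)
  (A2 : [/\ closed A, A 0, A != setT &
          forall x p, A x -> pos_cone le p -> A (x + p)])
  (A3 : rho_finite A M pi /\ continuous (rho A M pi))
  (hcone : asymptotic_cone A `&` ker_on M pi = [set 0]) :
  forall x : X, usc_at M (optimal_payoff A M pi) x.
Proof.
move=> x U; case=> O0 oO -> RxU.
have [b [bind hMe]] := hM.
pose lc := fun c : 'rV[R]_n => \sum_(i < n) c ord0 i *: b i.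
pose L := fun c : 'rV[R]_n => \sum_(i < n) c ord0 i * pi (b i).
have M0 : M 0.
  by rewrite hMe; exists (fun=> 0); rewrite big1 // => i _; rewrite scale0r.
have Mlin : forall a u v, M u -> M v -> M (a *: u + v).
  move=> a u v; rewrite hMe => -[cu ->] [cv ->]; exists (fun i => a * cu i + cv i).
  rewrite scaler_sumr -big_split /=; apply: eq_bigr => i _; by rewrite scalerDl scalerA.
have Mb : forall i, M (b i).
  move=> i; rewrite hMe; exists (fun j => if j == i then 1 else 0).
  rewrite (bigD1 i) //= eqxx scale1r big1 ?addr0 // => j /negbTE ->; by rewrite scale0r.
have pi0 : pi 0 = 0.
  have := hpi 1 _ _ M0 M0; rewrite scale1r addr0 mul1r => h; lra.
have lcP : forall (c : 'rV[R]_n) (r : seq 'I_n),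
    M (\sum_(i <- r) c ord0 i *: b i) /\
    pi (\sum_(i <- r) c ord0 i *: b i) = \sum_(i <- r) c ord0 i * pi (b i).
  move=> c; elim => [|i r [IHM IHp]]; first by rewrite !big_nil.
  by rewrite !big_cons; split; [exact: Mlin | rewrite hpi // IHp].
have Mlc : forall c, M (lc c) by move=> c; exact: (lcP c _).1.
have pilc : forall c, pi (lc c) = L c by move=> c; exact: (lcP c _).2.
have lc_cont : continuous lc.
  move=> c; apply: (@tvs_cvg_sum _ _ _ (nbhs c) _ _ _ (fun i (t : 'rV[R]_n) => t ord0 i *: b i)) => i.
  by apply: tvs_cvgZ; [exact: coord_continuous | exact: cvg_cst].
have L_cont : continuous L.
  move=> c; apply: (@R_cvg_sum _ _ (nbhs c) _ _ _ (fun i (t : 'rV[R]_n) => t ord0 i * pi (b i))) => i.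
  by apply: cvgM; [exact: coord_continuous | exact: cvg_cst].
have lc0 : forall c, lc c = 0 -> c = 0.
  move=> c /(bind (fun i => c ord0 i)) h; apply/matrixP => i j.
  by rewrite (ord1 i) mxE; exact: h.
have lcrow : forall c' : 'I_n -> R, lc (\row_i c' i) = \sum_(i < n) c' i *: b i.
  by move=> c'; apply: eq_bigr => i _; rewrite mxE.
pose Q := fun (y : X) (c : 'rV[R]_n) =>
  optimal_payoff A M pi y (lc c) /\ ~ O0 (lc c).
apply: contrapT => hV.
have nV : forall V, open V -> V x -> exists y c, V y /\ Q y c.
  move=> V oV Vx; apply: contrapT => hnot; apply: hV; exists V => // y Vy z Fz.
  split; last by case: Fz.
  apply: contrapT => Oz; apply: hnot.
  have := Fz; case=> Mz _ _; move: Mz; rewrite {1}hMe => -[c' zc'].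
  exists y, (\row_i c' i); split => //.
  by rewrite /Q lcrow -zc'.
pose sc := fun c : 'rV[R]_n => (1 + `|c|)^-1.
pose phi := fun c : 'rV[R]_n => sc c *: c.
have sc_gt0 : forall c, 0 < sc c by move=> c; rewrite /sc invr_gt0; apply: ltr_pwDl.
have sc_eq : forall c, 1 - `|phi c| = sc c.
  move=> c; rewrite /phi normrZ gtr0_norm // /sc.
  have h : 1 + `|c| != 0 by rewrite gt_eqF // ltr_pwDl.
  by field.
have phi_lt1 : forall c, `|phi c| < 1.
  by move=> c; have := sc_eq c; have := sc_gt0 c; lra.
pose G : set_system 'rV[R]_n :=
  [set S | exists V, nbhs x V /\ forall y c, V y -> Q y c -> S (phi c)].
have GF : ProperFilter G.
  apply: Build_ProperFilter.
    move=> [V [Vx HV]]; move: Vx; rewrite nbhsE => -[V' [oV' V'x] sV'].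
    have [y [c [V'y Qyc]]] := nV V' oV' V'x.
    exact: (HV y c (sV' y V'y) Qyc).
  apply: Build_Filter.
  - by exists setT; split => //; exact: filterT.
  - move=> S1 S2 [V1 [V1x H1]] [V2 [V2x H2]]; exists (V1 `&` V2); split.
      exact: filterI.
    by move=> y c [V1y V2y] Qyc; split; [exact: (H1 y c V1y Qyc) | exact: (H2 y c V2y Qyc)].
  - move=> S1 S2 S12 [V [Vx HV]]; exists V; split => // y c Vy Qyc.
    exact/S12/(HV y c).
pose K := [set v : 'rV[R]_n | `|v| <= 1].
have Kc : compact K.
  apply: bounded_closed_compact.
    exists 1; split => // r r1 v Kv; exact: le_trans Kv (ltW r1).
  apply: (@preimage_closed _ _ (fun v : 'rV[R]_n => `|v|) [set r : R | r <= 1]).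
    by move=> v _; exact: norm_continuous.
  exact: closed_le.
have GK : G K.
  exists setT; split; first exact: filterT.
  by move=> y c _ _; exact/ltW/phi_lt1.
have [v0 [Kv0 clv0]] := Kc G GF GK.
pose H : set_system (X * 'rV[R]_n) :=
  [set S | exists V B, [/\ nbhs x V, nbhs v0 B &
     forall y c, V y -> B (phi c) -> Q y c -> S (y, c)]].
have HF : ProperFilter H.
  apply: Build_ProperFilter.
    move=> [V [B [Vx Bv0 HV]]].
    pose SV := [set v | exists y c, [/\ V y, Q y c & v = phi c]].
    have GSV : G SV by exists V; split => // y c Vy Qyc; exists y, c.
    have [v [[y [c [Vy Qyc ->]]] Bv]] := clv0 SV B GSV Bv0.
    exact: (HV y c Vy Bv Qyc).
  apply: Build_Filter.
  - by exists setT, setT; split => //; exact: filterT.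
  - move=> S1 S2 [V1 [B1 [V1x B1v H1]]] [V2 [B2 [V2x B2v H2]]].
    exists (V1 `&` V2), (B1 `&` B2); split; [exact: filterI | exact: filterI |].
    move=> y c [V1y V2y] [B1c B2c] Qyc.
    by split; [exact: (H1 y c V1y B1c Qyc) | exact: (H2 y c V2y B2c Qyc)].
  - move=> S1 S2 S12 [V [B [Vx Bv HV]]]; exists V, B; split => // y c Vy Bc Qyc.
    exact/S12/(HV y c Vy Bc Qyc).
have HFf : Filter H by exact: (@filter_filter _ H HF).
have hy : (fun q : X * 'rV[R]_n => q.1) @ H --> x.
  move=> W Wx /=; exists W, setT; split => //; exact: filterT.
have hv : (fun q : X * 'rV[R]_n => phi q.2) @ H --> v0.
  move=> W Wv /=; exists setT, W; split => //; exact: filterT.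
have hQ : \forall q \near H, Q q.1 q.2.
  by exists setT, setT; split => //; exact: filterT.
have hrho : (fun q : X * 'rV[R]_n => rho A M pi q.1) @ H --> rho A M pi x.
  exact: (cvg_comp _ _ hy (A3.2 x)).
have [v0lt|v0ge] := ltrP (`|v0|) 1.
  pose psi := fun v : 'rV[R]_n => (1 - `|v|)^-1 *: v.
  have psiphi : forall c, psi (phi c) = c.
    move=> c; rewrite /psi sc_eq /phi scalerA mulVf ?scale1r //.
    exact: lt0r_neq0.
  have hpsi : psi @ v0 --> psi v0.
    have h1 : (fun v : 'rV[R]_n => 1 - `|v|) @ v0 --> 1 - `|v0|.
      exact: (cvgB (@cvg_cst _ (1:R) _ (nbhs v0) _) (cvg_norm (@cvg_id _ (nbhs v0)))).
    have h0 : 1 - `|v0| != 0 by rewrite subr_eq0 eq_sym lt_eqF.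
    have h2 := cvgV h0 h1; have h2f := h2 (nbhs_filter _).
    have h3 := cvgZ h2f (@cvg_id _ (nbhs v0)); exact: h3.
  pose c0 := psi v0.
  have hc : (fun q : X * 'rV[R]_n => q.2) @ H --> c0.
    have -> : (fun q : X * 'rV[R]_n => q.2) = psi \o (fun q => phi q.2).
      by apply: funext => q /=; rewrite psiphi.
    exact: (cvg_comp _ _ hv hpsi).
  pose z0 := lc c0.
  have hlc : (fun q : X * 'rV[R]_n => lc q.2) @ H --> z0.
    exact: (cvg_comp _ _ hc (lc_cont c0)).
  have hA : A (x + z0).
    have [Acl _ _ _] := A2.
    apply: (@closed_cvg _ _ H HF (fun q : X * 'rV[R]_n => q.1 + lc q.2) A Acl _ (x + z0)).
      by apply: filterS hQ => q [[_ Aq _] _].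
    exact: tvs_cvgD.
  have hpz : pi z0 = rho A M pi x.
    rewrite /z0 pilc.
    apply: (@near_lim_eq _ _ H HF (fun q : X * 'rV[R]_n => L q.2) (fun q : X * 'rV[R]_n => rho A M pi q.1)).
    - exact: (cvg_comp _ _ hc (L_cont c0)).
    - exact: hrho.
    - by apply: filterS hQ => q [[_ _ Pq] _]; rewrite -pilc.
  have [Oz0 _] : (O0 `&` M) z0 by apply: RxU; split; [exact: Mlc | exact: hA | exact: hpz].
  have hO : \forall q \near H, O0 (lc q.2) by apply: hlc; exact: (@open_nbhs_nbhs _ z0 O0 (conj oO Oz0)).
  have [q [[_ nO] Oq]] := filter_ex (filterI hQ hO).
  exact: nO.
have v0eq : `|v0| = 1 by apply/eqP; rewrite eq_le v0ge andbT; exact: Kv0.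
have hs : (fun q : X * 'rV[R]_n => 1 - `|phi q.2|) @ H --> (0 : R).
  have := cvgB (@cvg_cst _ (1:R) _ H _) (cvg_norm hv).
  rewrite v0eq subrr => h; exact: h.
have lcphi : forall c, lc (phi c) = (1 - `|phi c|) *: lc c.
  move=> c; rewrite sc_eq /lc scaler_sumr; apply: eq_bigr => i _.
  by rewrite /phi mxE scalerA.
have hL : L v0 = 0.
  apply: (@near_lim_eq _ _ H HF (fun q : X * 'rV[R]_n => L (phi q.2))
     (fun q : X * 'rV[R]_n => (1 - `|phi q.2|) * rho A M pi q.1)).
  - exact: (cvg_comp _ _ hv (L_cont v0)).
  - have := cvgM hs hrho; rewrite mul0r; exact.
  - apply: filterS hQ => q [[Mq Aq Pq] _].
    rewrite -pilc lcphi -Pq.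
    have := hpi (1 - `|phi q.2|) _ _ (Mlc q.2) M0; rewrite !addr0 pi0 addr0; exact.
pose w := lc v0.
have hw : (asymptotic_cone A `&` ker_on M pi) w.
  split; last by split; [exact: Mlc | rewrite pilc].
  move=> e e0.
  apply: (@closure_lim _ _ _ H HF
    (fun q : X * 'rV[R]_n => (1 - `|phi q.2|) *: q.1 + lc (phi q.2))).
    have := tvs_cvgD (tvs_cvgZ hs hy) (cvg_comp _ _ hv (lc_cont v0)).
    rewrite scale0r add0r => h; exact: h.
  have he := @cvgr_le _ _ H HFf _ 0 hs e e0.
  apply: filterS (filterI hQ he) => q [[[Mq Aq Pq] _] le_e].
  exists (1 - `|phi q.2|), (q.1 + lc q.2); split => //.
    by rewrite le_e andbT; have := phi_lt1 q.2; lra.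
  by rewrite scalerDr lcphi.
have w0 : w = 0 by rewrite hcone in hw.
have := lc0 _ w0 => v00.
by move: v0eq; rewrite v00 normr0 => /eqP; rewrite eq_sym oner_eq0.
Qed.
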